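(* Let $(\mathcal{S},\mathcal{A},\tau,\mu_0,\gamma)$ be fixed, and fix a selection rule $g$ assigning to each nonempty $B\subseteq\mathcal{A}$ a distribution $g(B)\in\Delta(\mathcal{A})$ with support exactly $B$. For a reward function $R$, let $\pi_R(s)=g(\arg\max_a A^\star_R(s,a))$ (a maximally supportive optimal policy), let $\Delta_R$ be the distribution over trajectories obtained by drawing $S_0\sim\mu_0$ and following $\pi_R$ with transitions from $\tau$, and let $\mathfrak{S}_R$ be the set of states visited with positive probability under $\Delta_R$. Let $\mathfrak{O}_R$ be the set of functions $\mathcal{O}:\mathcal{S}\to\mathcal{P}(\mathcal{A})\setminus\{\emptyset\}$ with $\mathcal{O}(s)=\arg\max_a A^\star_R(s,a)$ for all $s\in\mathfrak{S}_R$. Then for all reward functions $R,R'$: $\Delta_R=\Delta_{R'}$ if and only if $R'$ is produced from $R$ by an optimality-preserving transformation with some $\mathcal{O}\in\mathfrak{O}_R$.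
   Context: An MDP is $(\mathcal{S},\mathcal{A},\tau,\mu_0,R,\gamma)$ with finite $\mathcal{S},\mathcal{A}$, $\tau:\mathcal{S}\times\mathcal{A}\to\Delta(\mathcal{S})$, $\mu_0\in\Delta(\mathcal{S})$, $R:\mathcal{S}\times\mathcal{A}\times\mathcal{S}\to\mathbb{R}$, $\gamma\in(0,1)$. $A^\star_R$ is the optimal advantage function for reward $R$ ($Q^\star-V^\star$ of a policy maximising $\mathbb{E}_{S_0\sim\mu_0}[V^\pi(S_0)]$). A maximally supportive optimal policy gives positive probability to all optimal actions in every state; it is assumed its action probabilities in each state depend only on the set of optimal actions there (formalised by $g$). Given $\mathcal{O}:\mathcal{S}\to\mathcal{P}(\mathcal{A})\setminus\{\emptyset\}$, $R'$ is produced from $R$ by an optimality-preserving transformation with $\mathcal{O}$ if there exists $\Psi:\mathcal{S}\to\mathbb{R}$ with $\mathbb{E}_{S'\sim\tau(s,a)}[R'(s,a,S')+\gamma\Psi(S')]\le\Psi(s)$ for all $s,a$, with equality iff $a\in\mathcal{O}(s)$. *)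

(* Defs.v *)
From HB Require Import structures.
From mathcomp Require Import all_boot all_order all_algebra.
From mathcomp Require Import all_classical all_reals all_analysis.
Set Implicit Arguments. Unset Strict Implicit. Unset Printing Implicit Defensive.
Import Order.TTheory GRing.Theory Num.Theory.
Import numFieldNormedType.Exports.
Local Open Scope classical_set_scope.
Local Open Scope ring_scope.

Section MDP.
Variables (R : realType) (S A : finType).
(* transition kernel: tau s a s' = probability of s' after (s,a) *)
Variable tau : S -> A -> S -> R.
Variable mu0 : S -> R.
Variable gamma : R.

Definition is_distr (T : finType) (p : T -> R) : Prop :=
  (forall x, 0 <= p x) /\ \sum_(x : T) p x = 1.

Definition is_policy (pi : S -> A -> R) : Prop := forall s, is_distr (pi s).

Fixpoint Vfin (pi : S -> A -> R) (rw : S -> A -> S -> R) (n : nat) (s : S) : R :=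
  match n with
  | 0 => 0
  | n'.+1 => \sum_(a : A) pi s a *
               \sum_(s' : S) tau s a s' * (rw s a s' + gamma * Vfin pi rw n' s')
  end.

Definition Vpi (pi : S -> A -> R) (rw : S -> A -> S -> R) (s : S) : R :=
  limn (fun n => Vfin pi rw n s).

Definition Vstar (rw : S -> A -> S -> R) (s : S) : R :=
  sup [set Vpi pi rw s | pi in is_policy].

Definition Qstar (rw : S -> A -> S -> R) (s : S) (a : A) : R :=
  \sum_(s' : S) tau s a s' * (rw s a s' + gamma * Vstar rw s').

Definition Astar (rw : S -> A -> S -> R) (s : S) (a : A) : R :=
  Qstar rw s a - Vstar rw s.

Definition opt_acts (rw : S -> A -> S -> R) (s : S) : {set A} :=
  [set a | [forall b, Astar rw s b <= Astar rw s a]].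

Variable g : {set A} -> A -> R.

Definition piR (rw : S -> A -> S -> R) (s : S) (a : A) : R :=
  g (opt_acts rw s) a.

(* Probability, under the policy pi, of the path continuing with the
   state-action pairs (s,a) :: rest, given it is in state s. *)
Fixpoint chain_prob (pi : S -> A -> R) (sa : S * A) (rest : seq (S * A)) : R :=
  match rest with
  | [::] => pi sa.1 sa.2
  | sa' :: rest' => pi sa.1 sa.2 * tau sa.1 sa.2 sa'.1 * chain_prob pi sa' rest'
  end.

(* Probability under Delta_R that a trajectory starts with the given
   finite prefix (S_0,A_0),...,(S_n,A_n) of state-action pairs
   (cylinder-set probability). *)
Definition prefix_prob (rw : S -> A -> S -> R) (p : seq (S * A)) : R :=
  match p with
  | [::] => 1
  | sa :: rest => mu0 sa.1 * chain_prob (piR rw) sa rest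
  end.

(* Delta_R = Delta_R' : the two trajectory distributions agree on all
   cylinder sets (which determine a distribution on infinite trajectories). *)
Definition traj_distr_eq (rw rw' : S -> A -> S -> R) : Prop :=
  forall p : seq (S * A), prefix_prob rw p = prefix_prob rw' p.

Definition visited (rw : S -> A -> S -> R) (s : S) : Prop :=
  exists (p : seq (S * A)) (a : A), 0 < prefix_prob rw (rcons p (s, a)).

Definition frakO (rw : S -> A -> S -> R) (O : S -> {set A}) : Prop :=
  (forall s, O s != finset.set0) /\ (forall s, visited rw s -> O s = opt_acts rw s).

Definition opt_preserving (rw rw' : S -> A -> S -> R) (O : S -> {set A}) : Prop :=
  exists Psi : S -> R, forall s a,
    \sum_(s' : S) tau s a s' * (rw' s a s' + gamma * Psi s') <= Psi s /\
    (\sum_(s' : S) tau s a s' * (rw' s a s' + gamma * Psi s') = Psi s <-> a \in O s).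

End MDP.

(* Main.v *)
Require Import Defs.
From HB Require Import structures.
From mathcomp Require Import all_boot all_order all_algebra.
From mathcomp Require Import all_classical all_reals all_analysis.
From mathcomp Require Import ring lra.
Import Order.TTheory GRing.Theory Num.Theory.
Import numFieldNormedType.Exports.
Local Open Scope classical_set_scope.
Local Open Scope ring_scope.

Section Analytic.
Variables (R : realType) (S A : finType) (tau : S -> A -> S -> R) (gamma : R).
Hypothesis htau : forall s a, is_distr (tau s a).
Hypothesis hg0 : 0 < gamma.
Hypothesis hg1 : gamma < 1.

Definition QX (rw : S -> A -> S -> R) (X : S -> R) s a :=
  \sum_(s' : S) tau s a s' * (rw s a s' + gamma * X s').
Definition Tpi (pi : S -> A -> R) rw X s := \sum_(a : A) pi s a * QX rw X s a.

Lemma omg_neq0 : 1 - gamma != 0.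
Proof. by rewrite subr_eq0 eq_sym lt_eqF. Qed.

Lemma VfinS pi rw n s : Vfin tau gamma pi rw n.+1 s = Tpi pi rw (Vfin tau gamma pi rw n) s.
Proof. by []. Qed.

Lemma avg_le (T : finType) (w Z : T -> R) m : is_distr w -> (forall t, Z t <= m) ->
  \sum_t w t * Z t <= m.
Proof.
case=> w0 w1 hZ; apply: (@le_trans _ _ (\sum_t w t * m)).
  by apply: ler_sum => t _; apply: ler_wpM2l.
by rewrite -mulr_suml w1 mul1r.
Qed.

Lemma avg_ge (T : finType) (w Z : T -> R) m : is_distr w -> (forall t, m <= Z t) ->
  m <= \sum_t w t * Z t.
Proof.
case=> w0 w1 hZ; apply: (@le_trans _ _ (\sum_t w t * m)).
  by rewrite -mulr_suml w1 mul1r.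
by apply: ler_sum => t _; apply: ler_wpM2l.
Qed.

Lemma avg_abs (T : finType) (w Z : T -> R) m : is_distr w -> (forall t, `|Z t| <= m) ->
  `|\sum_t w t * Z t| <= m.
Proof.
move=> hw hZ; rewrite ler_norml; apply/andP; split.
  by apply: avg_ge => // t; have := hZ t; rewrite ler_norml => /andP[].
by apply: avg_le => // t; have := hZ t; rewrite ler_norml => /andP[].
Qed.

Lemma QX_diff rw X Y s a : QX rw X s a - QX rw Y s a =
  gamma * \sum_(s' : S) tau s a s' * (X s' - Y s').
Proof.
rewrite /QX -sumrB mulr_sumr; apply: eq_bigr => s' _; ring.
Qed.

Lemma Tpi_diff pi rw X Y s : Tpi pi rw X s - Tpi pi rw Y s =
  \sum_(a : A) pi s a * (QX rw X s a - QX rw Y s a).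
Proof.
rewrite /Tpi -sumrB; apply: eq_bigr => a _; ring.
Qed.

Lemma QX_mono rw X Y s a : (forall s', X s' <= Y s') -> QX rw X s a <= QX rw Y s a.
Proof.
move=> h; rewrite -subr_ge0 QX_diff; apply: mulr_ge0; first exact: ltW.
apply: sumr_ge0 => s' _; apply: mulr_ge0; first by case: (htau s a).
by rewrite subr_ge0.
Qed.

Lemma exists_max {T : finType} (t0 : T) (Z : T -> R) : exists t, forall u, Z u <= Z t.
Proof.
case: (@arg_maxP _ _ T t0 predT Z isT) => i _ Hi.
by exists i => u; apply: Hi.
Qed.

Lemma maxprin (Z : S -> R) :
  (forall m, (forall s, Z s <= m) -> forall s, Z s <= gamma * m) -> forall s, Z s <= 0.
Proof.
move=> H s; have [t Ht] := exists_max s Z.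
have h1 := H (Z t) Ht t.
have : Z t <= 0.
  have h2 : (1 - gamma) * Z t <= 0 by lra.
  by move: h2; rewrite pmulr_rle0 // subr_gt0.
by apply: le_trans.
Qed.

Lemma boundprin (Z : S -> R) c :
  (forall m, (forall s, `|Z s| <= m) -> forall s, `|Z s| <= c + gamma * m) ->
  forall s, `|Z s| <= c / (1 - gamma).
Proof.
move=> H s; have [t Ht] := exists_max s (fun u => `|Z u|).
have h1 := H _ Ht t.
have : `|Z t| <= c / (1 - gamma).
  rewrite ler_pdivlMr ?subr_gt0 //; lra.
by apply: le_trans.
Qed.

Lemma le_sum1 {T : finType} (F : T -> R) i : (forall j, 0 <= F j) -> F i <= \sum_j F j.
Proof.
move=> h; rewrite (bigD1 i) //= lerDl; apply: sumr_ge0 => j _; exact: h.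
Qed.

Definition Mr (rw : S -> A -> S -> R) := \sum_s \sum_a \sum_s' `|rw s a s'|.

Lemma Mr_ge rw s a s' : `|rw s a s'| <= Mr rw.
Proof.
rewrite /Mr.
have h1 := le_sum1 (fun s0 => \sum_a0 \sum_s'0 `|rw s0 a0 s'0|) s
  (fun j => sumr_ge0 _ (fun a0 _ => sumr_ge0 _ (fun s1 _ => normr_ge0 _))).
have h2 := le_sum1 (fun a0 => \sum_s'0 `|rw s a0 s'0|) a
  (fun j => sumr_ge0 _ (fun s1 _ => normr_ge0 _)).
have h3 := le_sum1 (fun s'0 => `|rw s a s'0|) s' (fun j => normr_ge0 _).
by apply: (le_trans h3); apply: (le_trans h2).
Qed.

Lemma Mr_ge0 rw : 0 <= Mr rw.
Proof. by do 3 (apply: sumr_ge0 => ? _). Qed.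

Lemma QX_abs rw X m s a : (forall s', `|X s'| <= m) -> `|QX rw X s a| <= Mr rw + gamma * m.
Proof.
move=> h; apply: avg_abs => // s'.
apply: (le_trans (ler_normD _ _)); apply: lerD; first exact: Mr_ge.
rewrite normrM gtr0_norm //; apply: ler_wpM2l => //; exact: ltW.
Qed.

Lemma Tpi_abs pi rw X m s : is_policy pi -> (forall s', `|X s'| <= m) ->
  `|Tpi pi rw X s| <= Mr rw + gamma * m.
Proof. by move=> hpi h; apply: avg_abs => // a; apply: QX_abs. Qed.


Lemma cvg_bigsum {T : finType} (f : T -> nat -> R) (l : T -> R) :
  (forall i, (fun n => f i n) @ \oo --> l i) ->
  (\sum_i f i n) @[n --> \oo] --> \sum_i l i.
Proof.
move=> h; rewrite unlock /reducebig.
elim: (index_enum T) => [|x r IH] /=; first exact: cvg_cst.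
exact: (@cvgD _ _ _ _ _ (fun n => f x n) (fun n => foldr _ _ _)).
Qed.

Lemma Tpi_cvg0 pi rw (X : nat -> S -> R) (Y : S -> R) s :
  (forall s', (fun n => X n s') @ \oo --> Y s') ->
  (fun n => Tpi pi rw (X n) s) @ \oo --> Tpi pi rw Y s.
Proof.
move=> h; apply: (cvg_bigsum (fun a n => pi s a * QX rw (X n) s a)) => a.
apply: cvgMr.
apply: (cvg_bigsum (fun s' n => tau s a s' * (rw s a s' + gamma * X n s'))) => s'.
apply: cvgMr.
apply: (@cvgD _ _ _ _ _ (fun _ => rw s a s') (fun n => gamma * X n s')).
  exact: cvg_cst.
exact: cvgMr.
Qed.

Lemma Tpi_cvg pi rw (X : nat -> S -> R) (Y : S -> R) :
  (forall s', (fun n => X n s') @ \oo --> Y s') -> forall s,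
  (fun n => Tpi pi rw (X n) s) @ \oo --> Tpi pi rw Y s.
Proof. move=> h s; move: h; exact: Tpi_cvg0. Qed.

Section Policy.
Variables (pi : S -> A -> R) (rw : S -> A -> S -> R).
Hypothesis hpi : is_policy pi.
Let B := Mr rw / (1 - gamma).

Lemma B_ge0 : 0 <= B.
Proof. by apply: divr_ge0; [exact: Mr_ge0 | rewrite subr_ge0 ltW]. Qed.

Lemma B_eq : Mr rw + gamma * B = B.
Proof. rewrite /B; field; exact: omg_neq0. Qed.

Lemma Vfin_bound n s : `|Vfin tau gamma pi rw n s| <= B.
Proof.
elim: n s => [|n IH] s; first by rewrite normr0 B_ge0.
rewrite VfinS -B_eq; exact: Tpi_abs.
Qed.

Lemma Vfin_diff n s : `|Vfin tau gamma pi rw n.+1 s - Vfin tau gamma pi rw n s| <= B * gamma ^+ n.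
Proof.
elim: n s => [|n IH] s.
  have -> : Vfin tau gamma pi rw 0 s = 0 by [].
  by rewrite expr0 mulr1 subr0; apply: Vfin_bound.
rewrite (VfinS _ _ n.+1) (VfinS _ _ n) Tpi_diff.
apply: avg_abs => // a; rewrite QX_diff normrM gtr0_norm //.
have -> : B * gamma ^+ n.+1 = gamma * (B * gamma ^+ n) by rewrite exprS; ring.
apply: ler_wpM2l; first exact: ltW.
by apply: avg_abs.
Qed.

Lemma Vfin_cvg s : (fun n => Vfin tau gamma pi rw n s) @ \oo --> Vpi tau gamma pi rw s.
Proof.
pose c n := B * gamma ^+ n / (1 - gamma).
pose u n := Vfin tau gamma pi rw n s + c n.
have hu : cvgn u.
  apply: nonincreasing_is_cvgn.
    apply/nonincreasing_seqP => n; rewrite /u /c.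
    have e : B * gamma ^+ n.+1 / (1 - gamma) = B * gamma ^+ n / (1 - gamma) - B * gamma ^+ n.
      by rewrite exprS; field; exact: omg_neq0.
    rewrite e; have := Vfin_diff n s; rewrite ler_norml => /andP[_ h]; lra.
  exists (- B) => _ [n _ <-]; rewrite /u /c.
  have := Vfin_bound n s; rewrite ler_norml => /andP[h _].
  have : 0 <= B * gamma ^+ n / (1 - gamma).
    apply: divr_ge0; last by rewrite subr_ge0 ltW.
    by apply: mulr_ge0; [exact: B_ge0 | apply: exprn_ge0; exact: ltW].
  lra.
have hc : (fun n => c n) @ \oo --> 0.
  have -> : 0 = B * 0 / (1 - gamma) by rewrite mulr0 mul0r.
  apply: cvgMl; apply: cvgMr; apply: cvg_expr.
  by rewrite gtr0_norm.
have h : (fun n => Vfin tau gamma pi rw n s) @ \oo --> limn u - 0.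
  have e : (fun n => Vfin tau gamma pi rw n s) = (fun n => u n - c n).
    by apply: funext => n; rewrite /u addrK.
  rewrite e; exact: (@cvgB _ _ _ _ _ u c).
exact: (cvgP _ h).
Qed.

Lemma Vpi_fix s : Vpi tau gamma pi rw s = Tpi pi rw (Vpi tau gamma pi rw) s.
Proof.
have H1 := Vfin_cvg s; rewrite -cvg_shiftS in H1.
have H2 := Tpi_cvg pi rw (fun n => Vfin tau gamma pi rw n) (Vpi tau gamma pi rw) (fun s' => Vfin_cvg s') s.
have e1 := cvg_lim (@Rhausdorff R) H1.
have e2 := cvg_lim (@Rhausdorff R) H2.
by rewrite -e1 -e2.
Qed.

Lemma Vpi_bound s : `|Vpi tau gamma pi rw s| <= B.
Proof.
apply: boundprin => m hm s'; rewrite Vpi_fix; exact: Tpi_abs.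
Qed.

End Policy.

Definition pdet (d : S -> A) (s : S) (a : A) : R := (a == d s)%:R.

Lemma pdet_policy d : is_policy (pdet d).
Proof.
move=> s; split; first by move=> a; rewrite /pdet ler0n.
rewrite (bigD1 (d s)) //= /pdet eqxx big1 ?addr0 // => b hb.
by rewrite (negbTE hb).
Qed.

Lemma Tpi_pdet d rw X s : Tpi (pdet d) rw X s = QX rw X s (d s).
Proof.
rewrite /Tpi (bigD1 (d s)) //= /pdet eqxx mul1r big1 ?addr0 // => b hb.
by rewrite (negbTE hb) mul0r.
Qed.

Section Bellman.
Variables (rw : S -> A -> S -> R) (a0 : A).
Let V := Vstar tau gamma rw.
Let E s := [set Vpi tau gamma pi rw s | pi in @is_policy R S A].

Lemma E_ne s : E s !=set0.
Proof.
exists (Vpi tau gamma (pdet (fun _ => a0)) rw s).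
by exists (pdet (fun _ => a0)) => //; apply: pdet_policy.
Qed.

Lemma E_ub s : has_ubound (E s).
Proof.
exists (Mr rw / (1 - gamma)) => _ [pi hpi <-].
by have := Vpi_bound pi rw hpi s; rewrite ler_norml => /andP[].
Qed.

Lemma Vpi_le_V pi : is_policy pi -> forall s, Vpi tau gamma pi rw s <= V s.
Proof.
move=> hpi s; apply: sup_upper_bound; first by split; [apply: E_ne | apply: E_ub].
by exists pi.
Qed.

Lemma V_le s x : (forall pi, is_policy pi -> Vpi tau gamma pi rw s <= x) -> V s <= x.
Proof.
move=> h; apply: ge_sup (E_ne s) _ => _ [pi hpi <-]; exact: h.
Qed.

Lemma bellman : exists d : S -> A,
  forall s, V s = QX rw V s (d s) /\ forall b, QX rw V s b <= V s.
Proof.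
have : forall s, exists a, forall b, QX rw V s b <= QX rw V s a.
  by move=> s; exact: (exists_max a0 (QX rw V s)).
case/choice => d hd; exists d.
have step1 : forall s, V s <= QX rw V s (d s).
  move=> s; apply: V_le => pi hpi; rewrite Vpi_fix //.
  apply: avg_le (hpi s) _ => a.
  apply: le_trans (hd s a); apply: QX_mono; exact: Vpi_le_V.
pose p := pdet d.
have hp : is_policy p by apply: pdet_policy.
have step2 : forall s, V s - Vpi tau gamma p rw s <= 0.
  apply: maxprin => m hm s.
  have h1 := step1 s.
  have h2 : Vpi tau gamma p rw s = QX rw (Vpi tau gamma p rw) s (d s).
    by rewrite Vpi_fix // Tpi_pdet.
  have h3 := QX_diff rw V (Vpi tau gamma p rw) s (d s).
  have h4 : \sum_(s' : S) tau s (d s) s' * (V s' - Vpi tau gamma p rw s') <= m.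
    by apply: avg_le.
  have h5 : gamma * \sum_(s' : S) tau s (d s) s' * (V s' - Vpi tau gamma p rw s') <= gamma * m.
    by apply: ler_wpM2l => //; exact: ltW.
  lra.
have eV : Vstar tau gamma rw = Vpi tau gamma p rw.
  apply: funext => s; apply/eqP; rewrite eq_le; apply/andP; split.
    by have := step2 s; rewrite subr_le0.
  exact: Vpi_le_V.
have e : forall s, V s = QX rw V s (d s).
  by move=> s; rewrite /V eV Vpi_fix // Tpi_pdet.
move=> s; split; first exact: e.
by move=> b; rewrite e; apply: hd.
Qed.

Lemma bellman_unique (Psi : S -> R) :
  (forall s a, QX rw Psi s a <= Psi s) -> (forall s, exists a, QX rw Psi s a = Psi s) ->
  forall s, Psi s = V s.
Proof.
move=> hle hex.
have [d hd] := bellman.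
have Z1 : forall s, V s - Psi s <= 0.
  apply: maxprin => m hm s.
  have [h1 _] := hd s.
  have h2 := hle s (d s).
  have h3 := QX_diff rw V Psi s (d s).
  have h4 : \sum_(s' : S) tau s (d s) s' * (V s' - Psi s') <= m by apply: avg_le.
  have h5 : gamma * \sum_(s' : S) tau s (d s) s' * (V s' - Psi s') <= gamma * m.
    by apply: ler_wpM2l => //; exact: ltW.
  lra.
have Z2 : forall s, Psi s - V s <= 0.
  apply: maxprin => m hm s.
  have [a ha] := hex s.
  have [_ h1] := hd s.
  have h2 := h1 a.
  have h3 := QX_diff rw Psi V s a.
  have h4 : \sum_(s' : S) tau s a s' * (Psi s' - V s') <= m by apply: avg_le.
  have h5 : gamma * \sum_(s' : S) tau s a s' * (Psi s' - V s') <= gamma * m.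
    by apply: ler_wpM2l => //; exact: ltW.
  lra.
move=> s; have := Z1 s; have := Z2 s; lra.
Qed.

Lemma opt_actsP s a : (a \in opt_acts tau gamma rw s) <-> Qstar tau gamma rw s a = V s.
Proof.
have [d hd] := bellman.
have [e1 e2] := hd s.
change (Qstar tau gamma rw s a) with (QX rw V s a).
rewrite inE; split.
  move/forallP => h; have := h (d s); rewrite /Astar.
  change (Qstar tau gamma rw s (d s)) with (QX rw V s (d s)).
  change (Qstar tau gamma rw s a) with (QX rw V s a).
  rewrite -/V -e1 => h'.
  have := e2 a; lra.
move=> ha; apply/forallP => b; rewrite /Astar.
change (Qstar tau gamma rw s b) with (QX rw V s b).
change (Qstar tau gamma rw s a) with (QX rw V s a).
rewrite -/V ha; have := e2 b; lra.
Qed.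

Lemma opt_acts_ne s : opt_acts tau gamma rw s != finset.set0.
Proof.
have [d hd] := bellman.
apply/set0Pn; exists (d s); apply/opt_actsP.
by have [e _] := hd s; rewrite e.
Qed.

End Bellman.
End Analytic.

Section Traj.
Variables (R : realType) (S A : finType) (tau : S -> A -> S -> R) (mu0 : S -> R)
  (gamma : R) (g : {set A} -> A -> R).
Hypothesis htau : forall s a, is_distr (tau s a).
Hypothesis hmu0 : is_distr mu0.
Hypothesis hg : forall B : {set A}, B != finset.set0 ->
          is_distr (g B) /\ (forall a, (0 < g B a) <-> a \in B).
Hypothesis hne : forall rw s, opt_acts tau gamma rw s != finset.set0.

Definition W (pi : S -> A -> R) (p : seq (S * A)) (s : S) : R :=
  match p with
  | [::] => mu0 s
  | sa0 :: rest => mu0 sa0.1 * chain_prob tau pi sa0 rest *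
                   tau (last sa0 rest).1 (last sa0 rest).2 s
  end.

Lemma chain_rcons pi sa0 rest sa : chain_prob tau pi sa0 (rcons rest sa) =
  chain_prob tau pi sa0 rest * tau (last sa0 rest).1 (last sa0 rest).2 sa.1 * pi sa.1 sa.2.
Proof.
elim: rest sa0 => [|x r IH] sa0 /=; first by [].
rewrite IH; ring.
Qed.

Lemma prefix_rcons rw p s a : prefix_prob tau mu0 gamma g rw (rcons p (s, a)) =
  W (piR tau gamma g rw) p s * piR tau gamma g rw s a.
Proof.
case: p => [|sa0 rest] //=.
rewrite chain_rcons /=; ring.
Qed.

Lemma W_eq rw rw' p s : prefix_prob tau mu0 gamma g rw p = prefix_prob tau mu0 gamma g rw' p ->
  W (piR tau gamma g rw) p s = W (piR tau gamma g rw') p s.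
Proof. by case: p => [|sa0 rest] //= h; rewrite h. Qed.

Lemma piR_ge0 rw s a : 0 <= piR tau gamma g rw s a.
Proof. by have [[h _] _] := hg _ (hne rw s); apply: h. Qed.

Lemma chain_ge0 rw sa rest : 0 <= chain_prob tau (piR tau gamma g rw) sa rest.
Proof.
elim: rest sa => [|x r IH] sa /=; first exact: piR_ge0.
apply: mulr_ge0; last exact: IH.
apply: mulr_ge0; first exact: piR_ge0.
by have [h _] := htau sa.1 sa.2; apply: h.
Qed.

Lemma W_ge0 rw p s : 0 <= W (piR tau gamma g rw) p s.
Proof.
have [hm _] := hmu0.
case: p => [|sa0 rest] /=; first exact: hm.
apply: mulr_ge0; first by apply: mulr_ge0; [exact: hm | exact: chain_ge0].
by have [h _] := htau (last sa0 rest).1 (last sa0 rest).2; apply: h.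
Qed.

Lemma traj_of_agree rw rw' :
  (forall s, visited tau mu0 gamma g rw s -> opt_acts tau gamma rw s = opt_acts tau gamma rw' s) ->
  traj_distr_eq tau mu0 gamma g rw rw'.
Proof.
move=> h p; elim/last_ind: p => [|q [s a] IH] //.
rewrite !prefix_rcons.
have hW := W_eq rw rw' q s IH.
have [hz|hnz] := eqVneq (W (piR tau gamma g rw) q s) 0.
  by rewrite -hW hz !mul0r.
have hpos : 0 < W (piR tau gamma g rw) q s by rewrite lt_def hnz W_ge0.
have hv : visited tau mu0 gamma g rw s.
  have /set0Pn [a' ha'] := hne rw s.
  exists q, a'; rewrite prefix_rcons; apply: mulr_gt0 => //.
  by have [_ h2] := hg _ (hne rw s); apply/h2.
by rewrite -hW /piR (h s hv).
Qed.

Lemma agree_of_traj rw rw' : traj_distr_eq tau mu0 gamma g rw rw' ->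
  forall s, visited tau mu0 gamma g rw s -> opt_acts tau gamma rw s = opt_acts tau gamma rw' s.
Proof.
move=> h s [q [a hpos]].
have hW := W_eq rw rw' q s (h q).
rewrite prefix_rcons hW in hpos.
have hnz : W (piR tau gamma g rw') q s != 0.
  apply/eqP => hz; move: hpos; rewrite hz mul0r ltxx //.
have hb : forall b, piR tau gamma g rw s b = piR tau gamma g rw' s b.
  move=> b; have := h (rcons q (s, b)); rewrite !prefix_rcons hW.
  by move/(mulfI hnz).
have [_ h1] := hg _ (hne rw s).
have [_ h2] := hg _ (hne rw' s).
apply/setP => b; apply/idP/idP => hb'.
  by apply/h2; rewrite -/(piR tau gamma g rw' s b) -hb; apply/h1.
by apply/h1; rewrite -/(piR tau gamma g rw s b) hb; apply/h2.
Qed.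

End Traj.

Theorem theorem3p8 (R : realType) (S A : finType)
  (tau : S -> A -> S -> R) (mu0 : S -> R) (gamma : R)
  (g : {set A} -> A -> R)
  (hA : (0 < #|A|)%N)
  (htau : forall s a, is_distr (tau s a))
  (hmu0 : is_distr mu0)
  (hgamma : 0 < gamma < 1)
  (hg : forall B : {set A}, B != finset.set0 ->
          is_distr (g B) /\ (forall a, (0 < g B a) <-> a \in B)) :
  forall rw rw' : S -> A -> S -> R,
    traj_distr_eq tau mu0 gamma g rw rw' <->
    exists O : S -> {set A},
      frakO tau mu0 gamma g rw O /\ opt_preserving tau gamma rw rw' O.
Proof.
case/card_gt0P: hA => a0 _.
case/andP: hgamma => hg0 hg1.
have hne : forall rw s, opt_acts tau gamma rw s != finset.set0.
  by move=> rw s; exact: (@opt_acts_ne _ _ _ tau gamma htau hg0 hg1 rw a0 s).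
move=> rw rw'; split.
  move=> htr; exists (opt_acts tau gamma rw'); split.
    split; first by move=> s; apply: hne.
    move=> s hv; symmetry.
    exact: (@agree_of_traj _ _ _ tau mu0 gamma g hg hne rw rw' htr s hv).
  exists (Vstar tau gamma rw') => s a.
  have [d hd] := @bellman _ _ _ tau gamma htau hg0 hg1 rw' a0.
  have hP := @opt_actsP _ _ _ tau gamma htau hg0 hg1 rw' a0 s a.
  split; first exact: ((hd s).2 a).
  split => h; [by apply/hP | exact: (proj1 hP h)].
case=> O [[hO hvis] [Psi hPsi]].
have hPsiV : forall s, Psi s = Vstar tau gamma rw' s.
  apply: (@bellman_unique _ _ _ tau gamma htau hg0 hg1 rw' a0 Psi).
    by move=> s a; exact: (hPsi s a).1.
  move=> s; have /set0Pn [a ha] := hO s.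
  by exists a; apply/(hPsi s a).2.
have eP : Psi = Vstar tau gamma rw' := funext hPsiV.
rewrite eP in hPsi.
have hOO : forall s, opt_acts tau gamma rw' s = O s.
  move=> s; apply/setP => a.
  have hP := @opt_actsP _ _ _ tau gamma htau hg0 hg1 rw' a0 s a.
  apply/idP/idP => h.
    by apply/(hPsi s a).2; apply/hP.
  by apply/hP; apply/(hPsi s a).2.
apply: (@traj_of_agree _ _ _ tau mu0 gamma g htau hmu0 hg hne) => s hv.
by rewrite hOO hvis.
Qed.
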